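(* Let $\eta_l\in(0,1]$ and $M\in[0,1]$ be fixed. For $\beta\in[0,1]$ put $r(\beta):=1-\eta_l+M(1-\beta)$, $\zeta(\beta):=M(1-\beta)^2$ and $$\lambda_1(\beta):=\frac{r(\beta)+\beta+\sqrt{(r(\beta)-\beta)^2-4\zeta(\beta)}}{2},$$ where for a negative radicand $D$ the square root is $i\sqrt{|D|}$. Then $$\operatorname*{argmin}_{\beta\in[0,1]}|\lambda_1(\beta)|=\begin{cases}1-\dfrac{\eta_l}{(1-\sqrt M)^2}&\text{if }0\le M\le(1-\sqrt{\eta_l})^2,\\[4pt] 0&\text{if }(1-\sqrt{\eta_l})^2<M\le 1-\eta_l,\\[4pt] 1-\dfrac{\eta_l}{(1+\sqrt M)^2}&\text{if }1-\eta_l\le M\le1.\end{cases}$$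
   Context: In the paper, $\eta_l=\sigma_l^2/\|A\|_F^2$ for the $l$-th largest singular value $\sigma_l$ of a matrix $A$, and $\lambda_1$ is the eigenvalue of larger modulus of the $2\times2$ matrix $\begin{bmatrix} r&\zeta\\-1&\beta\end{bmatrix}$; $|\cdot|$ denotes the modulus of a complex number. *)

(* Defs.v *)
From HB Require Import structures.
From mathcomp Require Import all_boot all_order all_algebra.
From mathcomp.real_closed Require Import complex.
Set Implicit Arguments. Unset Strict Implicit. Unset Printing Implicit Defensive.
Import Order.TTheory GRing.Theory Num.Theory.
Local Open Scope ring_scope.

Definition csqrt (R : rcfType) (D : R) : R[i] :=
  if 0 <= D then (Num.sqrt D)%:C%C else ('i * (Num.sqrt (- D))%:C)%C.

Definition r_of (R : rcfType) (eta M beta : R) : R := 1 - eta + M * (1 - beta).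
Definition zeta_of (R : rcfType) (M beta : R) : R := M * (1 - beta) ^+ 2.

Definition lambda1 (R : rcfType) (eta M beta : R) : R[i] :=
  let r := r_of eta M beta in
  let z := zeta_of M beta in
  (((r + beta)%:C)%C + csqrt ((r - beta) ^+ 2 - 4%:R * z)) / 2%:R.

Definition in_argmin01 (R : rcfType) (f : R -> R[i]) (b : R) : Prop :=
  0 <= b <= 1 /\ forall b' : R, 0 <= b' <= 1 -> `|f b| <= `|f b'|.

(* Main.v *)
Require Import Defs.
From HB Require Import structures.
From mathcomp Require Import all_boot all_order all_algebra.
From mathcomp.real_closed Require Import complex.
From mathcomp Require Import ring lra.
Import Order.TTheory GRing.Theory Num.Theory.
Local Open Scope ring_scope.

Section S.
Context {R : rcfType}.
Implicit Types eta M b : R.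

Definition sF eta M b := r_of eta M b + b.
Definition DF eta M b := (r_of eta M b - b) ^+ 2 - 4%:R * zeta_of M b.
Definition LF eta M b := r_of eta M b * b + zeta_of M b.
Definition KF eta M b := if 0 <= DF eta M b then (sF eta M b + Num.sqrt (DF eta M b)) ^+ 2
  else sF eta M b ^+ 2 - DF eta M b.

Lemma normlam eta M b : `|lambda1 eta M b| = (Num.sqrt (KF eta M b))%:C%C / 2%:R.
Proof.
rewrite /lambda1 normrM normfV.
have -> : `|(2%:R : R[i])| = 2%:R by rewrite ger0_norm // ler0n.
congr (_ / _).
rewrite normc_def /KF /csqrt -/(DF eta M b) -/(sF eta M b).
case: ifP => HD /=.
  by rewrite addr0 expr0n /= addr0.
rewrite !mul0r !mul1r !add0r subr0 sqr_sqrtr; last by rewrite oppr_ge0 ltW // ltNge HD.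
congr (Num.sqrt _)%:C%C; ring.
Qed.

Lemma red eta M b b' : KF eta M b <= KF eta M b' -> `|lambda1 eta M b| <= `|lambda1 eta M b'|.
Proof.
move=> H; rewrite !normlam ler_pM2r ?invr_gt0 ?ltr0n // lecR.
by apply: ler_wsqrtr.
Qed.


Lemma s2D eta M b : sF eta M b ^+ 2 - DF eta M b = 4%:R * LF eta M b.
Proof. rewrite /sF /DF /LF; ring. Qed.

Lemma K1 eta M b : 0 <= sF eta M b -> 4%:R * LF eta M b <= KF eta M b.
Proof.
move=> hs; rewrite -s2D /KF; case: ifP => hD //.
have hu := sqrtr_ge0 (DF eta M b).
have hu2 := sqr_sqrtr hD.
move: (Num.sqrt _) hu hu2 => u hu hu2; rewrite -hu2; nra.
Qed.

Lemma K2 eta M b : 0 <= sF eta M b -> sF eta M b ^+ 2 <= KF eta M b.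
Proof.
move=> hs; rewrite /KF; case: ifP => hD.
  have hu := sqrtr_ge0 (DF eta M b).
  move: (Num.sqrt _) hu => u hu; nra.
move/negbT: hD; rewrite -ltNge => hD; lra.
Qed.

Lemma K3 eta M b : DF eta M b <= 0 -> KF eta M b = 4%:R * LF eta M b.
Proof.
move=> hD; rewrite -s2D /KF; case: ifP => hD' //.
have -> : DF eta M b = 0 by apply/eqP; rewrite eq_le hD hD'.
by rewrite sqrtr0 !subr0 addr0.
Qed.

Lemma K4 eta M b (c : R) : 0 <= DF eta M b -> 0 <= c ->
  c ^+ 2 - sF eta M b * c + LF eta M b <= 0 -> 4%:R * c ^+ 2 <= KF eta M b.
Proof.
move=> hD hc hp; rewrite /KF hD.
have hu := sqrtr_ge0 (DF eta M b).
have hu2 := sqr_sqrtr hD.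
have hL : 4%:R * LF eta M b = sF eta M b ^+ 2 - DF eta M b by rewrite s2D.
move: (Num.sqrt (DF eta M b) : R) hu hu2 hL hp => u hu hu2 hL hp.
move: (sF eta M b) (LF eta M b) (DF eta M b) hL hu2 hp => s L D hL hu2 hp.
have h1 : c <= (s + u) / 2%:R.
  rewrite leNgt; apply/negP => hlt.
  have : 0 < (c - (s + u) / 2%:R) * (c - (s - u) / 2%:R).
    apply: mulr_gt0; lra.
  have -> : (c - (s + u) / 2%:R) * (c - (s - u) / 2%:R) = c ^+ 2 - s * c + L.
    have -> : L = (s^+2 - D) / 4%:R by rewrite -hL; field.
    rewrite -hu2; field.
  by [].
  move=> ?; lra.
have h3 : 2%:R * c <= s + u by lra.
have h2 : 0 <= 2%:R * c by lra.
have := ler_pM h2 h2 h3 h3.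
rewrite !expr2; lra.
Qed.

Lemma I1 eta M a b : a ^+ 2 = M ->
  DF eta M b = ((1 + a) ^+ 2 * (1 - b) - eta) * ((1 - a) ^+ 2 * (1 - b) - eta).
Proof. move=> <-; rewrite /DF /r_of /zeta_of; ring. Qed.

Lemma I2 eta M b b' : LF eta M b' - LF eta M b = (b - b') * (M + eta - 1).
Proof. rewrite /LF /r_of /zeta_of; ring. Qed.

Lemma I3 eta M b b' : sF eta M b' - sF eta M b = (b' - b) * (1 - M).
Proof. rewrite /sF /r_of; ring. Qed.

Lemma sF_ge0 eta M b : eta <= 1 -> 0 <= M -> 0 <= b <= 1 -> 0 <= sF eta M b.
Proof. move=> h1 h2 /andP[h3 h4]; rewrite /sF /r_of; nra. Qed.

Lemma I4 eta M a t b : a ^+ 2 = M -> t * (1 - a) ^+ 2 = eta ->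
  (sF eta M (1 - t) / 2%:R) ^+ 2 - sF eta M b * (sF eta M (1 - t) / 2%:R) + LF eta M b
  = ((1 - b) - t) * (- (t * a * (1 - a) ^+ 2)).
Proof. move=> <- <-; rewrite /sF /LF /r_of /zeta_of; by field. Qed.

Lemma LD0 eta M b : DF eta M b = 0 -> 4%:R * LF eta M b = sF eta M b ^+ 2.
Proof. by move=> h; rewrite -s2D h subr0. Qed.
End S.

Theorem corollary1p3 (R : rcfType) (eta M : R) :
  0 < eta <= 1 -> 0 <= M <= 1 ->
  [/\ M <= (1 - Num.sqrt eta) ^+ 2 ->
        in_argmin01 (lambda1 eta M) (1 - eta / (1 - Num.sqrt M) ^+ 2),
      (1 - Num.sqrt eta) ^+ 2 < M <= 1 - eta ->
        in_argmin01 (lambda1 eta M) 0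
    & 1 - eta <= M ->
        in_argmin01 (lambda1 eta M) (1 - eta / (1 + Num.sqrt M) ^+ 2)].
Proof.
move=> /andP[he0 he1] /andP[hM0 hM1].
have he2 : Num.sqrt eta ^+ 2 = eta by rewrite sqr_sqrtr // ltW.
have ha2 : Num.sqrt M ^+ 2 = M by rewrite sqr_sqrtr.
have hep : 0 < Num.sqrt eta by rewrite sqrtr_gt0.
have ha0 : 0 <= Num.sqrt M by apply: sqrtr_ge0.
have he1' : Num.sqrt eta <= 1 by rewrite -sqrtr1 ler_wsqrtr.
have ha1 : Num.sqrt M <= 1 by rewrite -sqrtr1 ler_wsqrtr.
move: (Num.sqrt eta : R) (Num.sqrt M : R) he2 ha2 hep ha0 he1' ha1 => e a he2 ha2 hep ha0 he1' ha1.
have hsF : forall b, 0 <= b <= 1 -> 0 <= sF eta M b := fun b => @sF_ge0 R eta M b he1 hM0.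
split.
- move=> hc.
  have ha : a <= 1 - e by nra.
  have h1a : 0 < 1 - a by lra.
  have hq : 0 < (1 - a) ^+ 2 by rewrite exprn_gt0.
  have ht : eta / (1 - a) ^+ 2 * (1 - a) ^+ 2 = eta by rewrite divfK // gt_eqF.
  have ht0 : 0 <= eta / (1 - a) ^+ 2 by rewrite divr_ge0 // ltW.
  move: (eta / (1 - a) ^+ 2) ht ht0 => t ht ht0.
  have ht1 : t <= 1 by nra.
  have hD : DF eta M (1 - t) = 0.
    by rewrite (I1 eta M a _ ha2) -ht; ring.
  have hb : 0 <= 1 - t <= 1 by apply/andP; split; lra.
  have hK : KF eta M (1 - t) = 4%:R * LF eta M (1 - t) by rewrite K3 // hD.
  have hS := LD0 _ _ _ hD.
  have hMe : M + eta - 1 <= 0 by nra.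
  split => // b' hb'; apply: red; rewrite hK.
  have hsb' := hsF _ hb'.
  case: (lerP (1 - t) b') => hbb.
    apply: le_trans (K1 _ _ _ hsb'); have := I2 eta M (1 - t) b'; nra.
  have hs0 := hsF _ hb.
  set c := sF eta M (1 - t) / 2%:R.
  have hc4 : 4%:R * LF eta M (1 - t) = 4%:R * c ^+ 2.
    by rewrite hS /c; field.
  rewrite hc4; apply: K4.
  - rewrite (I1 eta M a _ ha2) -ht; apply: mulr_ge0; nra.
  - rewrite /c; apply: divr_ge0 => //; apply: ler0n.
  - rewrite /c (I4 eta M a t b' ha2 ht); apply: mulr_ge0_le0 => //.
      lra.
    rewrite oppr_le0; apply: mulr_ge0 => //; nra.
- move=> /andP[hc1 hc2].
  have ha : 1 - e < a by nra.
  have hq : (1 - a) ^+ 2 < eta by nra.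
  have hD : DF eta M 0 <= 0.
    rewrite (I1 eta M a _ ha2) subr0 !mulr1; apply: mulr_ge0_le0; nra.
  have hb : 0 <= (0:R) <= 1 by rewrite lexx ler01.
  have hK : KF eta M 0 = 4%:R * LF eta M 0 by rewrite K3.
  have hMe : M + eta - 1 <= 0 by lra.
  split => // b' hb'; apply: red; rewrite hK.
  have hsb' := hsF _ hb'.
  apply: le_trans (K1 _ _ _ hsb'); have := I2 eta M 0 b'; case/andP: hb' => ? ?; nra.
- move=> hc.
  have hq : 0 < (1 + a) ^+ 2 by rewrite exprn_gt0 //; lra.
  have ht : eta / (1 + a) ^+ 2 * (1 + a) ^+ 2 = eta by rewrite divfK // gt_eqF.
  have ht0 : 0 <= eta / (1 + a) ^+ 2 by rewrite divr_ge0 // ltW.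
  move: (eta / (1 + a) ^+ 2) ht ht0 => t ht ht0.
  have ht1 : t <= 1 by nra.
  have hD : DF eta M (1 - t) = 0.
    by rewrite (I1 eta M a _ ha2) -ht; ring.
  have hb : 0 <= 1 - t <= 1 by apply/andP; split; lra.
  have hK : KF eta M (1 - t) = 4%:R * LF eta M (1 - t) by rewrite K3 // hD.
  have hS := LD0 _ _ _ hD.
  have hMe : 0 <= M + eta - 1 by lra.
  split => // b' hb'; apply: red; rewrite hK.
  have hsb' := hsF _ hb'.
  have hs0 := hsF _ hb.
  case: (lerP b' (1 - t)) => hbb.
    apply: le_trans (K1 _ _ _ hsb'); have := I2 eta M (1 - t) b'; nra.
  apply: le_trans (K2 _ _ _ hsb'); rewrite hS.
  have h3 := I3 eta M (1 - t) b'.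
  have h4 : sF eta M (1 - t) <= sF eta M b'.
    rewrite -subr_ge0 h3; apply: mulr_ge0; lra.
  have := ler_pM hs0 hs0 h4 h4; rewrite !expr2; lra.
Qed.
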